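(* Let $A,\hat A^0,\tilde A\in\mathbb{R}^{d\times k}$ with columns $a_i,\hat a^0_i,\tilde a_i$, and let $\eta_0,\eta_1>0$, $r:=\eta_0\sqrt k/d$, $\tau:=\eta_1\sqrt{k/d}$. Suppose $\|A\|\le\tau$, $\|\hat A^0\|\le\tau$, and $\|\hat a^0_i-a_i\|\le r$ for all $i$. Let $\tilde A=UDV^\top$ be an SVD, $\hat D$ the diagonal matrix with $\hat D_{ii}=\min\{D_{ii},\tau\}$, $Q:=U\hat DV^\top$ with columns $Q_i$, and define $\hat A$ column-wise by $\hat a_i=Q_i$ if $\|Q_i-\hat a^0_i\|\le r$, and $\hat a_i=\hat a^0_i+r\frac{Q_i-\hat a^0_i}{\|Q_i-\hat a^0_i\|}$ otherwise. Then $\|\hat A-A\|_F\le 2\|\tilde A-A\|_F$, $\|\hat a_i-a_i\|\le 2r$ for all $i$, and $\|\hat A\|\le 3\tau$.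
   Context: $\|\cdot\|$ is the spectral norm and $\|\cdot\|_F$ the Frobenius norm. *)

(* Defs.v *)
From HB Require Import structures.
From mathcomp Require Import all_boot all_order all_algebra.
Set Implicit Arguments. Unset Strict Implicit. Unset Printing Implicit Defensive.
Import Order.TTheory GRing.Theory Num.Theory.
Local Open Scope ring_scope.

Definition vnorm (R : rcfType) (n : nat) (v : 'cV[R]_n) : R :=
  Num.sqrt (\sum_(i < n) v i 0 ^+ 2).

Definition frob (R : rcfType) (m n : nat) (M : 'M[R]_(m, n)) : R :=
  Num.sqrt (\sum_(i < m) \sum_(j < n) M i j ^+ 2).

(* "spectral norm of M is at most c": ||M|| = sup_{x<>0} |Mx|/|x| <= c *)
Definition specnorm_le (R : rcfType) (m n : nat) (M : 'M[R]_(m, n)) (c : R) : Prop :=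
  forall x : 'cV[R]_n, vnorm (M *m x) <= c * vnorm x.

Definition orth_mx (R : rcfType) (n : nat) (U : 'M[R]_n) : Prop :=
  U *m U^T = 1%:M /\ U^T *m U = 1%:M.

Definition nonneg_diag (R : rcfType) (m n : nat) (D : 'M[R]_(m, n)) : Prop :=
  (forall i j, nat_of_ord i <> nat_of_ord j -> D i j = 0) /\
  (forall i j, nat_of_ord i = nat_of_ord j -> 0 <= D i j).

Definition clip_diag (R : rcfType) (m n : nat) (D : 'M[R]_(m, n)) (tau : R) : 'M[R]_(m, n) :=
  \matrix_(i, j) (if nat_of_ord i == nat_of_ord j then Num.min (D i j) tau else 0).

Definition radius (R : rcfType) (d k : nat) (eta0 : R) : R :=
  eta0 * Num.sqrt (k%:R) / d%:R.
Definition tauv (R : rcfType) (d k : nat) (eta1 : R) : R :=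
  eta1 * Num.sqrt (k%:R / d%:R).

Definition proj_cols (R : rcfType) (d k : nat) (Q A0 : 'M[R]_(d, k)) (r : R) : 'M[R]_(d, k) :=
  \matrix_(i, j)
    (let q := col j Q in let a := col j A0 in
     if vnorm (q - a) <= r then q i 0
     else (a + (r / vnorm (q - a)) *: (q - a)) i 0).

(* Main.v *)
Require Import Defs.
From HB Require Import structures.
From mathcomp Require Import all_boot all_order all_algebra.
From mathcomp Require Import ring lra.
Import Order.TTheory GRing.Theory Num.Theory.
Local Open Scope ring_scope.

Module Aux.
Set Implicit Arguments. Unset Strict Implicit.

Section Aux.
Variable R : rcfType.

Definition ss n (v : 'cV[R]_n) := \sum_(i < n) v i 0 ^+ 2.
Definition ip n (u v : 'cV[R]_n) := \sum_(i < n) u i 0 * v i 0.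
Definition fs m n (M : 'M[R]_(m, n)) := \sum_(i < m) \sum_(j < n) M i j ^+ 2.

Lemma ss_ge0 n (v : 'cV[R]_n) : 0 <= ss v.
Proof. by apply: sumr_ge0 => i _; rewrite sqr_ge0. Qed.

Lemma fs_ge0 m n (M : 'M[R]_(m, n)) : 0 <= fs M.
Proof. by apply: sumr_ge0 => i _; apply: sumr_ge0 => j _; rewrite sqr_ge0. Qed.

Lemma vnormE n (v : 'cV[R]_n) : vnorm v = Num.sqrt (ss v).
Proof. by []. Qed.

Lemma vnorm_ge0 n (v : 'cV[R]_n) : 0 <= vnorm v.
Proof. exact: sqrtr_ge0. Qed.

Lemma vnorm_sqr n (v : 'cV[R]_n) : vnorm v ^+ 2 = ss v.
Proof. by rewrite sqr_sqrtr // ss_ge0. Qed.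

Lemma ss_lin n (x y : R) (u v : 'cV[R]_n) :
  ss (x *: u + y *: v) = x ^+ 2 * ss u + 2 * x * y * ip u v + y ^+ 2 * ss v.
Proof.
rewrite /ss /ip !mulr_sumr -!big_split /=; apply: eq_bigr => i _; rewrite !mxE.
ring.
Qed.

Lemma ss_fs n (v : 'cV[R]_n) : ss v = fs v.
Proof. by apply: eq_bigr => i _; rewrite big_ord1. Qed.

Lemma fs_tr m n (M : 'M[R]_(m, n)) : fs M = \tr (M *m M^T).
Proof.
rewrite /mxtrace; apply: eq_bigr => i _; rewrite mxE; apply: eq_bigr => j _.
by rewrite mxE expr2.
Qed.

Lemma fs_orthl m n (W : 'M[R]_m) (M : 'M[R]_(m, n)) :
  W^T *m W = 1%:M -> fs (W *m M) = fs M.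
Proof.
move=> HW; rewrite !fs_tr trmx_mul !mulmxA mxtrace_mulC !mulmxA.
by rewrite HW mul1mx.
Qed.

Lemma fs_orthr m n (W : 'M[R]_n) (M : 'M[R]_(m, n)) :
  W *m W^T = 1%:M -> fs (M *m W) = fs M.
Proof.
move=> HW; rewrite !fs_tr trmx_mul !mulmxA -(mulmxA M) HW mulmx1 //.
Qed.

Lemma fs_cols m n (M : 'M[R]_(m, n)) : fs M = \sum_(j < n) ss (col j M).
Proof.
rewrite /fs exchange_big /=; apply: eq_bigr => j _; apply: eq_bigr => i _.
by rewrite mxE.
Qed.

Lemma ss_eq0 n (v : 'cV[R]_n) : ss v = 0 -> forall i, v i 0 = 0.
Proof.
move=> H i; apply/eqP; rewrite -sqrf_eq0; apply/eqP.
by apply: (psumr_eq0P _ H) => // j _; rewrite sqr_ge0.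
Qed.

Lemma CS n (u v : 'cV[R]_n) : ip u v <= vnorm u * vnorm v.
Proof.
have [Hu|Hu] := eqVneq (ss u) 0.
  rewrite /ip big1 ?mulr_ge0 ?vnorm_ge0 // => i _.
  by rewrite (ss_eq0 Hu) mul0r.
have [Hv|Hv] := eqVneq (ss v) 0.
  rewrite /ip big1 ?mulr_ge0 ?vnorm_ge0 // => i _.
  by rewrite (ss_eq0 Hv) mulr0.
set a := vnorm u; set b := vnorm v.
have ha : 0 < a by rewrite sqrtr_gt0 lt_def Hu ss_ge0.
have hb : 0 < b by rewrite sqrtr_gt0 lt_def Hv ss_ge0.
have H := ss_ge0 (b *: u + (- a) *: v).
rewrite ss_lin -!vnorm_sqr -/a -/b in H.
have hab : 0 < a * b by rewrite mulr_gt0.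
nra.
Qed.

Lemma vnorm_tri n (u v : 'cV[R]_n) : vnorm (u + v) <= vnorm u + vnorm v.
Proof.
have H : ss (u + v) = ss u + 2 * ip u v + ss v.
  by rewrite -[u]scale1r -[v]scale1r ss_lin !scale1r; ring.
rewrite [vnorm (u+v)]vnormE H -(ger0_norm (addr_ge0 (vnorm_ge0 u) (vnorm_ge0 v))) -sqrtr_sqr.
rewrite ler_sqrt ?sqr_ge0 //.
have := CS u v; rewrite -!vnorm_sqr; nra.
Qed.

Lemma vnormZ n c (v : 'cV[R]_n) : vnorm (c *: v) = `|c| * vnorm v.
Proof.
rewrite vnormE; have -> : ss (c *: v) = c ^+ 2 * ss v.
  by rewrite -(addr0 (c *: v)) -(scale0r v) ss_lin; ring.
by rewrite sqrtrM ?sqr_ge0 // sqrtr_sqr.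
Qed.

Lemma entry_le n (v : 'cV[R]_n) i : `|v i 0| <= vnorm v.
Proof.
rewrite -sqrtr_sqr ler_sqrt ?ss_ge0 // /ss (bigD1 i) //= lerDl.
by apply: sumr_ge0 => j _; rewrite sqr_ge0.
Qed.

End Aux.

Section Aux2.
Variable R : rcfType.

Lemma proj_le n (q a0 a : 'cV[R]_n) r : 0 <= r -> vnorm (a - a0) <= r ->
  let p := if vnorm (q - a0) <= r then q else a0 + (r / vnorm (q - a0)) *: (q - a0) in
  ss (p - a) <= ss (q - a) /\ vnorm (p - a0) <= r.
Proof.
move=> r0 har p; rewrite /p; case: ifP => hq; first by split.
move/negbT: hq; rewrite -ltNge => hq.
set w := q - a0; set c := a - a0; set rho := vnorm w.
have rho0 : 0 < rho by apply: le_lt_trans hq.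
set t := r / rho.
have trho : t * rho = r by rewrite /t mulfVK // gt_eqF.
have t0 : 0 <= t by rewrite divr_ge0 // ltW.
have E1 : a0 + t *: w - a = t *: w + (-1) *: c.
  by apply/matrixP => i j; rewrite !mxE; ring.
have E2 : q - a = 1 *: w + (-1) *: c.
  by apply/matrixP => i j; rewrite !mxE; ring.
have E3 : a0 + t *: w - a0 = t *: w.
  by apply/matrixP => i j; rewrite !mxE; ring.
split; last by rewrite E3 vnormZ ger0_norm // trho.
rewrite E1 E2 !ss_lin.
have hX : ip w c <= rho * r.
  apply: (le_trans (CS w c)); rewrite ler_wpM2l //; exact: ltW.
have hS : ss w = rho ^+ 2 by rewrite vnorm_sqr.
rewrite hS.
have h1 : 0 <= (1 - t) * (t * rho ^+ 2 - ip w c).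
  apply: mulr_ge0; first by rewrite subr_ge0 /t ler_pdivrMr // mul1r ltW.
  by rewrite subr_ge0 expr2 mulrA trho mulrC.
have h2 : 0 <= (1 - t) ^+ 2 * rho ^+ 2 by rewrite mulr_ge0 ?sqr_ge0.
nra.
Qed.

Lemma sum_eqnat_in d k (i : 'I_d) (f : 'I_k -> R) (hik : (i < k)%N) :
  \sum_(j < k) (if nat_of_ord i == nat_of_ord j then f j else 0) = f (Ordinal hik).
Proof.
rewrite (bigD1 (Ordinal hik)) //= eqxx big1 ?addr0 // => j hj.
case: eqP => // hij; case/eqP: hj; apply/val_inj; by rewrite /= hij.
Qed.

Lemma sum_eqnat_out d k (i : 'I_d) (f : 'I_k -> R) : ~~ (i < k)%N ->
  \sum_(j < k) (if nat_of_ord i == nat_of_ord j then f j else 0) = 0.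
Proof.
move=> hik; rewrite big1 // => j _; case: eqP => // hij; move: (ltn_ord j).
by rewrite -hij (negbTE hik).
Qed.

Lemma spec_add m n (M N : 'M[R]_(m, n)) a b :
  specnorm_le M a -> specnorm_le N b -> specnorm_le (M + N) (a + b).
Proof.
move=> hM hN x; rewrite mulmxDl mulrDl.
exact: (le_trans (vnorm_tri _ _) (lerD (hM x) (hN x))).
Qed.

Lemma spec_mul m n p (M : 'M[R]_(m, n)) (N : 'M[R]_(n, p)) a b :
  0 <= a -> specnorm_le M a -> specnorm_le N b -> specnorm_le (M *m N) (a * b).
Proof.
move=> a0 hM hN x; rewrite -mulmxA -mulrA.
exact: (le_trans (hM _) (ler_wpM2l a0 (hN x))).
Qed.

Lemma spec_mono m n (M : 'M[R]_(m, n)) a b :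
  a <= b -> specnorm_le M a -> specnorm_le M b.
Proof.
move=> hab hM x; by apply: (le_trans (hM x)); rewrite ler_wpM2r // vnorm_ge0.
Qed.

Lemma spec_orth n (W : 'M[R]_n) : W^T *m W = 1%:M -> specnorm_le W 1.
Proof.
by move=> hW x; rewrite mul1r !vnormE !ss_fs fs_orthl.
Qed.

Lemma spec_diag n (l : 'rV[R]_n) : (forall j, l 0 j ^+ 2 <= 1) ->
  specnorm_le (diag_mx l) 1.
Proof.
move=> hl x; rewrite mul1r !vnormE ler_sqrt ?ss_ge0 //.
apply: ler_sum => i _; rewrite mul_diag_mx mxE exprMn.
by rewrite ler_piMl ?sqr_ge0.
Qed.

End Aux2.

Section Aux3.
Variable R : rcfType.

Lemma spec_clip d k (D : 'M[R]_(d, k)) tau : nonneg_diag D -> 0 <= tau ->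
  specnorm_le (clip_diag D tau) tau.
Proof.
move=> [_ hD] t0 x.
have step1 : forall i, ((clip_diag D tau *m x) i 0) ^+ 2 <=
    tau ^+ 2 * \sum_(j < k) (if nat_of_ord i == nat_of_ord j then x j 0 ^+ 2 else 0).
  move=> i.
  have -> : (clip_diag D tau *m x) i 0 = \sum_(j < k)
      (if nat_of_ord i == nat_of_ord j then Num.min (D i j) tau * x j 0 else 0).
    by rewrite mxE; apply: eq_bigr => j _; rewrite mxE; case: ifP => _; rewrite ?mul0r.
  case: (boolP (i < k)%N) => hik.
    rewrite (sum_eqnat_in (fun j => Num.min (D i j) tau * x j 0) hik).
    rewrite (sum_eqnat_in (fun j => x j 0 ^+ 2) hik) exprMn ler_wpM2r ?sqr_ge0 //.
    have h0 : 0 <= Num.min (D i (Ordinal hik)) tau by rewrite le_min t0 hD.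
    have h1 : Num.min (D i (Ordinal hik)) tau <= tau by rewrite ge_min lexx orbT.
    nra.
  rewrite !sum_eqnat_out // expr0n /= mulr0 //.
have -> : tau * vnorm x = Num.sqrt (tau ^+ 2 * ss x).
  by rewrite sqrtrM ?sqr_ge0 // sqrtr_sqr ger0_norm.
rewrite vnormE ler_sqrt; last by rewrite mulr_ge0 ?sqr_ge0 ?ss_ge0.
apply: (le_trans (ler_sum _ (fun i _ => step1 i))).
rewrite -mulr_sumr ler_wpM2l ?sqr_ge0 // exchange_big /= /ss.
apply: ler_sum => j _.
have -> : \sum_(i < d) (if nat_of_ord i == nat_of_ord j then x j 0 ^+ 2 else 0) =
   \sum_(i < d) (if nat_of_ord j == nat_of_ord i then (fun _ => x j 0 ^+ 2) i else 0).
  by apply: eq_bigr => i _; rewrite eq_sym.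
case: (boolP (j < d)%N) => hjd.
  by rewrite (sum_eqnat_in _ hjd).
by rewrite sum_eqnat_out // sqr_ge0.
Qed.

Lemma vnorm_delta k (j : 'I_k) : vnorm (delta_mx j 0 : 'cV[R]_k) = 1.
Proof.
rewrite vnormE /ss (bigD1 j) //= big1 ?addr0 ?mxE ?eqxx ?expr1n ?sqrtr1 //.
by move=> i /negbTE hi; rewrite mxE hi expr0n.
Qed.

Lemma colB m n (M N : 'M[R]_(m, n)) j : col j (M - N) = col j M - col j N.
Proof. by apply/matrixP => i l; rewrite !mxE. Qed.

End Aux3.
End Aux.
Import Aux.

Theorem mainTheorem10 (R : rcfType) (d k : nat) (A A0 At : 'M[R]_(d, k))
  (eta0 eta1 : R) (U : 'M[R]_d) (D : 'M[R]_(d, k)) (V : 'M[R]_k) :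
  0 < eta0 -> 0 < eta1 ->
  specnorm_le A (tauv d k eta1) ->
  specnorm_le A0 (tauv d k eta1) ->
  (forall i : 'I_k, vnorm (col i A0 - col i A) <= radius d k eta0) ->
  orth_mx U -> orth_mx V -> nonneg_diag D -> At = U *m D *m V^T ->
  let Q := U *m clip_diag D (tauv d k eta1) *m V^T in
  let Ah := proj_cols Q A0 (radius d k eta0) in
  [/\ frob (Ah - A) <= 2 * frob (At - A),
      (forall i : 'I_k, vnorm (col i Ah - col i A) <= 2 * radius d k eta0)
    & specnorm_le Ah (3 * tauv d k eta1)].
Proof.
move=> e0 e1 hA hA0 hcol hU hV hD hAt.
have r0 : 0 <= radius d k eta0.
  by rewrite /radius divr_ge0 ?mulr_ge0 ?sqrtr_ge0 ?ler0n // ltW.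
have t0 : 0 <= tauv d k eta1 by rewrite /tauv mulr_ge0 ?sqrtr_ge0 // ltW.
set r := radius d k eta0 in hcol r0 *.
set tau := tauv d k eta1 in hA hA0 t0 *.
move=> Q Ah.
have colAh : forall j, col j Ah =
    (if vnorm (col j Q - col j A0) <= r then col j Q
     else col j A0 + (r / vnorm (col j Q - col j A0)) *: (col j Q - col j A0)).
  move=> j; apply/matrixP => i l; rewrite (ord1 l) /Ah /proj_cols !mxE /=.
  by case: ifP => _; rewrite ?mxE.
have hcol' : forall j, vnorm (col j A - col j A0) <= r.
  move=> j; have -> : col j A - col j A0 = (-1) *: (col j A0 - col j A).
    by apply/matrixP => i l; rewrite !mxE; ring.
  by rewrite vnormZ normrN normr1 mul1r.
have hproj : forall j, ss (col j Ah - col j A) <= ss (col j Q - col j A) /\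
    vnorm (col j Ah - col j A0) <= r.
  by move=> j; rewrite colAh; apply: proj_le.
split.
-
  have s1 : fs (Ah - A) <= fs (Q - A).
    rewrite !fs_cols; apply: ler_sum => j _; rewrite !colB; exact: (hproj j).1.
  pose B := U^T *m A *m V.
  have hAeq : A = U *m B *m V^T.
    by rewrite /B !mulmxA hU.1 mul1mx -mulmxA hV.1 mulmx1.
  have hB : forall i j, `|B i j| <= tau.
    move=> i j; have -> : B i j = (U^T *m (A *m (V *m (delta_mx j 0 : 'cV_k)))) i 0.
      by rewrite /B !mulmxA -colE !mxE.
    apply: (le_trans (entry_le _ _)).
    rewrite vnormE ss_fs fs_orthl ?trmxK ?hU.1 // -ss_fs -vnormE.
    apply: (le_trans (hA _)).
    by rewrite vnormE ss_fs fs_orthl ?hV.2 // -ss_fs -vnormE vnorm_delta mulr1.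
  clearbody B.
  have fsUV : forall X : 'M[R]_(d, k), fs (U *m X *m V^T) = fs X.
    by move=> X; rewrite fs_orthr ?trmxK ?hV.2 // fs_orthl // hU.2.
  have hQ : Q - A = U *m (clip_diag D tau - B) *m V^T.
    by rewrite {1}hAeq /Q -mulmxBl -mulmxBr.
  have hAt' : At - A = U *m (D - B) *m V^T.
    by rewrite {1}hAeq hAt -mulmxBl -mulmxBr.
  have s2 : fs (clip_diag D tau - B) <= fs (D - B).
    apply: ler_sum => i _; apply: ler_sum => j _; rewrite !mxE.
    have := hB i j; rewrite ler_norml => /andP [hb1 hb2].
    case: eqP => hij.
      rewrite minEle; case: ifP => // /negbT; rewrite -ltNge => hlt.
      have h3 : 0 <= (D i j - tau) * (D i j + tau - 2 * B i j).
        by apply: mulr_ge0; lra.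
      nra.
    by rewrite hD.1 //.
  rewrite /frob -/(fs _) -/(fs _).
  apply: (le_trans (y := Num.sqrt (fs (At - A)))); last first.
    by rewrite ler_peMl ?sqrtr_ge0 // ler1n.
  rewrite ler_sqrt ?fs_ge0 //; apply: (le_trans s1).
  by rewrite hQ hAt' !fsUV.
-
  move=> j.
  have -> : col j Ah - col j A = (col j Ah - col j A0) + (col j A0 - col j A).
    by rewrite addrA subrK.
  apply: (le_trans (vnorm_tri _ _)).
  by rewrite mulr2n mulrDl mul1r lerD // ?(hproj j).2 ?hcol.
-
  pose lam := \row_j (if vnorm (col j Q - col j A0) <= r then 1
                      else r / vnorm (col j Q - col j A0)).
  pose lam' := \row_j (1 - lam 0 j).
  have hlam : forall j, 0 <= lam 0 j <= 1.
    move=> j; rewrite mxE; case: ifP => [_|/negbT]; first by rewrite ler01 lexx.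
    rewrite -ltNge => hlt; have hp : 0 < vnorm (col j Q - col j A0).
      exact: le_lt_trans hlt.
    apply/andP; split; first exact: divr_ge0 r0 (ltW hp).
    by rewrite ler_pdivrMr // mul1r ltW.
  have hAh : Ah = Q *m diag_mx lam + A0 *m diag_mx lam'.
    apply/matrixP => i j; have -> : Ah i j = col j Ah i 0 by rewrite [RHS]mxE.
    rewrite colAh !mul_mx_diag !mxE.
    case: (boolP (vnorm (col j Q - col j A0) <= r)) => h; rewrite ?mxE; ring.
  have sQ : specnorm_le Q (1 * tau * 1).
    apply: spec_mul; first by rewrite mulr_ge0.
      apply: spec_mul => //; first exact: spec_orth hU.2.
      exact: spec_clip.
    by apply: spec_orth; rewrite trmxK hV.1.
  rewrite hAh; apply: (@spec_mono _ _ _ _ ((1 * tau * 1) * 1 + tau * 1)).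
    lra.
  have hd1 : specnorm_le (diag_mx lam) 1.
    by apply: spec_diag => j; have := hlam j; case/andP => h1 h2; nra.
  have hd2 : specnorm_le (diag_mx lam') 1.
    by apply: spec_diag => j; rewrite mxE; have := hlam j; case/andP => h1 h2; nra.
  apply: spec_add; [apply: (spec_mul _ sQ hd1) | apply: (spec_mul _ hA0 hd2)].
  all: by rewrite ?mul1r ?mulr1.
Qed.
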